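(* Fix $\gamma\in(0,1]$ and $0<\alpha<0.25$, and let $\xi>0$ be arbitrarily small. Then for all sufficiently large $N$ and all $i,j\in\{1,\dots,b\}$, $$\big|[J(s^* )]^{-1}_{ij}\big|\le\frac{12}{\gamma}N^{2\alpha+2\xi}.$$
   Context: Let $N\ge1$, $\lambda=1-\gamma/N^\alpha$, and $b=b(N)\ge1$ an integer with $b=O(\log N)$. The mean-field vector field is $f_k(s)=\lambda(s_{k-1}^2-s_k^2)-(s_k-s_{k+1})$, $k=1,\dots,b$, with $s_0=1,s_{b+1}=0$; $s^*$ is its unique equilibrium in $\{s\in\mathbb R^b:1\ge s_1\ge\cdots\ge s_b\ge0\}$. $J(s^* )$ is the Jacobian of $f$ at $s^*$: the $b\times b$ tridiagonal matrix with $J_{kk}=-2\lambda s^*_k-1$, $J_{k,k+1}=1$, $J_{k+1,k}=2\lambda s^*_k$. Both $s^*$ and $J(s^* )$ depend on $N$. *)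

(* Defs.v *)
From HB Require Import structures.
From mathcomp Require Import all_boot all_order all_algebra.
From mathcomp Require Import all_classical all_reals all_analysis.
Set Implicit Arguments. Unset Strict Implicit. Unset Printing Implicit Defensive.
Import Order.TTheory GRing.Theory Num.Theory.
Local Open Scope ring_scope.

(* Mean-field model.  Components s_1..s_b are stored in a function
   s : 'I_b -> R with s_k = s (k-1) (0-based ordinals). *)

Definition lam {R : realType} (gamma alpha : R) (N : nat) : R :=
  1 - gamma / (N%:R `^ alpha).

(* extended vector: sext s 0 = s_0 = 1, sext s k = s_k (1<=k<=b), else 0 (s_{b+1}=0) *)
Definition sext {R : realType} (n : nat) (s : 'I_n -> R) (k : nat) : R :=
  if k == 0%N then 1 else oapp s 0 (insub k.-1 : option 'I_n).

Definition mf_field {R : realType} (l : R) (n : nat) (s : 'I_n -> R) (k : nat) : R :=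
  l * (sext s k.-1 ^+ 2 - sext s k ^+ 2) - (sext s k - sext s k.+1).

Definition is_equilibrium {R : realType} (l : R) (n : nat) (s : 'I_n -> R) : Prop :=
  (forall k : nat, (1 <= k <= n)%N -> mf_field l s k = 0) /\
  (forall k : nat, (1 <= k <= n)%N -> sext s k <= sext s k.-1) /\
  0 <= sext s n.

Definition Jmat {R : realType} (l : R) (n : nat) (s : 'I_n -> R) : 'M[R]_n :=
  \matrix_(i < n, j < n)
    (if i == j then - (2 * l * s i) - 1
     else if (j == i.+1 :> nat) then 1
     else if (i == j.+1 :> nat) then 2 * l * s j
     else 0).

(* Main.v *)
Require Import Defs.
From HB Require Import structures.
From mathcomp Require Import all_boot all_order all_algebra.
From mathcomp Require Import all_classical all_reals all_analysis.
From mathcomp Require Import ring lra.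
Import Order.TTheory GRing.Theory Num.Theory.
Local Open Scope ring_scope.

Section Alg.
Variable R : realType.

Lemma sextS n (s : 'I_n -> R) (i : 'I_n) : sext s i.+1 = s i.
Proof.
rewrite /sext /=; case: insubP => [j _ e|]; last by rewrite ltn_ord.
by rewrite /= (val_inj e).
Qed.

Lemma sext_big n (s : 'I_n -> R) k : (n < k)%N -> sext s k = 0.
Proof.
move=> h; rewrite /sext; case: k h => // k h /=.
by rewrite insubF // -ltnS ltnNge h.
Qed.

Lemma sum_pick n (m : nat) (G : nat -> R) :
  \sum_(l < n) ((l == m :> nat)%:R * G l) = if (m < n)%N then G m else 0.
Proof.
elim: n => [|n IH]; first by rewrite big_ord0.
rewrite big_ord_recr /= IH.
case: (ltngtP m n) => h.
- by rewrite (ltn_trans h) // mul0r addr0.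
- by rewrite ltnS leqNgt h /= mul0r addr0.
- by rewrite h ltnSn mul1r add0r.
Qed.

Lemma sum_pick2 n (i : nat) (G : nat -> R) : (i < n)%N ->
  \sum_(l < n) ((i == l.+1 :> nat)%:R * G l) = if i is i'.+1 then G i' else 0.
Proof.
move=> hi; case: i hi => [|i] hi.
  by rewrite big1 // => l _; rewrite mul0r.
rewrite (eq_bigr (fun l : 'I_n => ((l == i :> nat)%:R * G l))); last first.
  by move=> l _; rewrite eqSS eq_sym.
by rewrite sum_pick (ltn_trans (ltnSn i) hi).
Qed.

Lemma neqSn (k : nat) : (k == k.+1) = false. Proof. by elim: k. Qed.

Definition aa (l : R) {n} (s : 'I_n -> R) k := 2 * l * sext s k.

Lemma Jrow l n (s : 'I_n -> R) (F : nat -> R) (i : 'I_n) : F 0%N = 0 ->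
  \sum_(l0 < n) Jmat l s i l0 * F l0.+1 =
   aa l s i * F i - (aa l s i.+1 + 1) * F i.+1 +
     (if (i.+1 < n)%N then F i.+2 else 0).
Proof.
move=> F0.
rewrite (eq_bigr (fun l0 : 'I_n =>
   ((l0 == i :> nat)%:R * ((- (aa l s i.+1) - 1) * F i.+1)
   + (l0 == i.+1 :> nat)%:R * F l0.+1)
   + (i == l0.+1 :> nat)%:R * (aa l s l0.+1 * F l0.+1))); last first.
  move=> l0 _; rewrite /Jmat mxE.
  case: (eqVneq i l0) => [->|h].
    by rewrite eqxx neqSn /aa sextS /= mulr1n !mulr0n; lra.
  have h' : (l0 == i :> nat) = false by apply/negbTE; rewrite eq_sym.
  rewrite h'; case: eqP => [e|_].
    by rewrite e (ltn_eqF (leqnSn _)) /= mulr1n !mulr0n; lra.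
  case: eqP => [e|_]; last by rewrite /= !mulr0n; lra.
  by rewrite /aa !sextS /=; lra.
rewrite !big_split /=.
rewrite (sum_pick _ _ (fun _ => (- aa l s i.+1 - 1) * F i.+1)).
rewrite (@sum_pick2 _ _ (fun k => aa l s k.+1 * F k.+1)) //.
rewrite (eq_bigr (fun l0 : 'I_n => ((l0 == i.+1 :> nat)%:R * F i.+2))); last first.
  by move=> l0 _; case: eqP => [->|_] //=; rewrite !mulr0n !mul0r.
rewrite (sum_pick _ _ (fun _ => F i.+2)) ltn_ord.
case: (nat_of_ord i) => [|i']; rewrite ?F0 /=; case: ifP => _; lra.
Qed.

Section Sol.
Variables (l : R) (n : nat) (s : 'I_n -> R).
Hypothesis ha : forall k, 0 <= aa l s k.

Fixpoint zs k := if k is k'.+1 then aa l s k' * zs k' + 1 else 0.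
Fixpoint ys (j0 : nat) k :=
  if k is k'.+1 then aa l s k' * ys j0 k' - ((k'.+1 <= j0)%N)%:R else 0.
Definition beta := aa l s n.
Definition cc j0 := ys j0 n / (1 + beta * zs n).
Definition xs j0 k := ys j0 k - beta * cc j0 * zs k.

Lemma zs_ge0 k : 0 <= zs k.
Proof. elim: k => //= k IH; have := ha k; nra. Qed.

Lemma den_gt0 : 0 < 1 + beta * zs n.
Proof. have := zs_ge0 n; have := ha n; rewrite /beta; nra. Qed.

Lemma S_eq j0 k : aa l s k * xs j0 k - xs j0 k.+1 - beta * xs j0 n
   = ((k.+1 <= j0)%N)%:R.
Proof.
have hd := den_gt0.
have hc : beta * xs j0 n = beta * cc j0.
  by rewrite /xs /cc; field; rewrite gt_eqF.
rewrite hc /xs /=; lra.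
Qed.

Definition Bmx : 'M[R]_n := \matrix_(i < n, j < n) xs j.+1 i.+1.

Lemma JB : Jmat l s *m Bmx = 1%:M.
Proof.
apply/matrixP => i j; rewrite !mxE.
rewrite (eq_bigr (fun l0 : 'I_n => Jmat l s i l0 * xs j.+1 l0.+1)); last first.
  by move=> l0 _; congr (_ * _); rewrite /Bmx mxE.
rewrite (@Jrow l n s (xs j.+1) i); last by rewrite /xs /=; lra.
have S1 := S_eq j.+1 i.
case: ifP => hi.
  have S2 := S_eq j.+1 i.+1.
  have -> : (i == j :> nat)%:R = ((i.+1 <= j.+1)%N)%:R - ((i.+2 <= j.+1)%N)%:R :> R.
    by rewrite !ltnS; case: (ltngtP i j) => h /=; rewrite ?subrr ?subr0.
  rewrite mulrDl mul1r; lra.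
have hn : i.+1 = n by apply/anti_leq/andP; split; [exact: ltn_ord | rewrite leqNgt hi].
have -> : (i == j :> nat)%:R = ((i.+1 <= j.+1)%N)%:R :> R.
  have hj : (j < i.+1)%N by rewrite hn ltn_ord.
  rewrite ltnS; case: (ltngtP i j) => h //=.
  by move: hj; rewrite ltnS leqNgt h.
have e1 : aa l s n = aa l s i.+1 by rewrite hn.
have e2 : xs j.+1 n = xs j.+1 i.+1 by rewrite hn.
move: S1; rewrite /beta e1 e2 => S1; rewrite mulrDl mul1r; lra.
Qed.

Lemma ys_bound j0 k : `|ys j0 k| <= zs k.
Proof.
elim: k => [|k IH] /=; first by rewrite normr0.
have hk := ha k.
have hw : `|((k.+1 <= j0)%N)%:R : R| <= 1 by case: (k.+1 <= j0)%N; rewrite /= ?normr0 ?normr1.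
apply: (le_trans (ler_normB _ _)).
rewrite normrM (ger0_norm hk).
have : aa l s k * `|ys j0 k| <= aa l s k * zs k by apply: ler_wpM2l.
lra.
Qed.

Lemma xs_bound j0 k : `|xs j0 k| <= 2 * zs k.
Proof.
have hd := den_gt0.
have hb : 0 <= beta := ha n.
have hz := zs_ge0 k.
have hzn := zs_ge0 n.
have hy := ys_bound j0 k.
have hyn := ys_bound j0 n.
have hc : `|beta * cc j0 * zs k| <= zs k.
  rewrite normrM (ger0_norm hz) normrM (ger0_norm hb) /cc normrM normfV (gtr0_norm hd).
  have h1 : beta * (`|ys j0 n| / (1 + beta * zs n)) <= 1.
    rewrite mulrA ler_pdivrMr // mul1r.
    have : beta * `|ys j0 n| <= beta * zs n by apply: ler_wpM2l.
    lra.
  rewrite -[X in _ <= X]mul1r ler_wpM2r //.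
rewrite /xs; apply: (le_trans (ler_normB _ _)); lra.
Qed.

Lemma zs_bound K : (forall k, aa l s k <= 2) -> (forall k, (K < k)%N -> aa l s k <= 1) ->
  forall k, zs k <= k%:R * 2 ^+ (minn k K.+1).
Proof.
move=> h2 h1; elim=> [|k IH] /=; first by rewrite mul0r.
have hz := zs_ge0 k.
have hk := ha k.
have hp : 0 <= k%:R * 2 ^+ minn k K.+1 :> R by rewrite mulr_ge0 // exprn_ge0.
case: (leqP k K) => hkK.
  have e1 : minn k.+1 K.+1 = k.+1 by apply/minn_idPl.
  have e2 : minn k K.+1 = k by apply/minn_idPl; apply: (leq_trans hkK).
  rewrite e1; rewrite e2 in IH.
  rewrite exprS -natr1.
  have : aa l s k * zs k <= 2 * (k%:R * 2 ^+ k).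
    apply: (le_trans (ler_wpM2l hk IH)); apply: ler_wpM2r => //.
  have : 1 <= 2 ^+ k :> R by apply: exprn_ege1; lra.
  nra.
have e1 : minn k.+1 K.+1 = K.+1 by apply/minn_idPr; apply: ltnW.
have e2 : minn k K.+1 = K.+1 by apply/minn_idPr.
rewrite e1; rewrite e2 in IH.
rewrite -natr1.
have : aa l s k * zs k <= zs k.
  by rewrite -[X in _ <= X]mul1r ler_wpM2r // h1.
have : 1 <= 2 ^+ K.+1 :> R by apply: exprn_ege1; lra.
nra.
Qed.

End Sol.

Section Eq.
Variables (l : R) (n : nat) (s : 'I_n -> R).
Hypothesis hl0 : 0 <= l.
Hypothesis hl1 : l <= 1.
Hypothesis heq : is_equilibrium l s.

Lemma sext0 : sext s 0 = 1. Proof. by []. Qed.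

Lemma sext_le1 k : sext s k <= 1.
Proof.
case: (leqP k n) => hk; last by rewrite sext_big // ler01.
elim: k hk => [|k IH] hk; first by rewrite sext0.
have := (heq.2.1 k.+1); rewrite hk /= => /(_ isT) h.
exact: le_trans h (IH (ltnW hk)).
Qed.

Lemma sext_ge0 k : 0 <= sext s k.
Proof.
case: (leqP k n) => hk; last by rewrite sext_big.
have : forall d, (d <= n)%N -> sext s n <= sext s (n - d).
  elim=> [|d IH] hd; first by rewrite subn0.
  apply: le_trans (IH (ltnW hd)) _.
  have e : (n - d)%N = (n - d.+1).+1 by rewrite subnS prednK // subn_gt0.
  rewrite e; have := (heq.2.1 (n - d.+1).+1); rewrite /= -e leq_subr.
  by move=> /(_ isT).
move=> /(_ (n - k)%N (leq_subr _ _)); rewrite subKn // => h.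
exact: le_trans heq.2.2 h.
Qed.

Lemma aa_ge0 k : 0 <= aa l s k.
Proof. by rewrite /aa !mulr_ge0 // sext_ge0. Qed.

Lemma aa_le2 k : aa l s k <= 2.
Proof. rewrite /aa -mulrA; have := ler_pM hl0 (sext_ge0 k) hl1 (sext_le1 k); rewrite mul1r; lra. Qed.

Definition gg k := l * sext s k ^+ 2 - sext s k.+1.

Lemma gg_const k : (k <= n)%N -> gg k = gg n.
Proof.
move=> hk; rewrite -(subKn hk); elim: (n - k)%N (leq_subr k n) => [|d IH] hd.
  by rewrite subn0.
rewrite -IH ?(ltnW hd) //.
have e : (n - d)%N = (n - d.+1).+1 by rewrite subnS prednK // subn_gt0.
have := (heq.1 (n - d)%N); rewrite e /= -e leq_subr /= => /(_ isT).
by rewrite e /mf_field /gg /= => h; lra.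
Qed.

Lemma sext_step k : (k < n)%N -> sext s k.+1 <= l * sext s k ^+ 2.
Proof.
move=> hk; have := gg_const k (ltnW hk); rewrite /gg (@sext_big n s n.+1 (ltnSn n)).
have := sext_ge0 n; have : 0 <= l * sext s n ^+ 2 by rewrite mulr_ge0 // sqr_ge0.
lra.
Qed.

Lemma sext_pow k : (k <= n)%N -> sext s k * l <= l ^+ (2 ^ k).
Proof.
elim: k => [|k IH] hk; first by rewrite sext0 mul1r expr1.
have h1 := IH (ltnW hk).
have h0 : 0 <= sext s k * l by rewrite mulr_ge0 // sext_ge0.
rewrite expnS mul2n -addnn exprD.
have := sext_step k hk.
have : (sext s k * l) ^+ 2 <= l ^+ (2 ^ k) * l ^+ (2 ^ k).
  by rewrite expr2 ler_pM.
rewrite !expr2 => A B; have C := ler_wpM2r hl0 B.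
have E : l * (sext s k * sext s k) * l = sext s k * l * (sext s k * l) by ring.
lra.
Qed.

Lemma bern (t : R) p : 0 <= t <= 1 -> (1 - t) ^+ p * (1 + p%:R * t) <= 1.
Proof.
move=> /andP[t0 t1]; elim: p => [|p IH]; first by rewrite expr0 mul0r addr0 mul1r.
have h0 : 0 <= (1 - t) ^+ p by apply: exprn_ge0; lra.
have e : (1 - t) ^+ p.+1 * (1 + p.+1%:R * t) =
   (1 - t) ^+ p * (1 + p%:R * t) - (1 - t) ^+ p * (p%:R * t * t + t * t).
  by rewrite exprS -natr1; ring.
rewrite e; have : 0 <= (1 - t) ^+ p * (p%:R * t * t + t * t).
  by rewrite mulr_ge0 // addr_ge0 // ?mulr_ge0.
lra.
Qed.

Lemma half_bound (t : R) k : l = 1 - t -> 0 < t <= 1 -> 1/2 < sext s k ->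
  (2 ^ k)%:R <= 2 / t.
Proof.
move=> hlt /andP[t0 t1] hk.
have ht : 1 <= 1 / t by rewrite ler_pdivlMr // mul1r.
case: k hk => [|k] hk.
  by rewrite expn0; rewrite ler_pdivlMr //; lra.
case: (leqP k.+1 n) => hkn; last by move: hk; rewrite sext_big //; lra.
have hs := sext_step k hkn.
have hx0 := sext_ge0 k; have hx1 := sext_le1 k.
have hsq : sext s k ^+ 2 <= 1 by rewrite expr2; have := ler_pM hx0 hx0 hx1 hx1; rewrite mul1r.
have hlpos : 1/2 < l.
  have : l * sext s k ^+ 2 <= l by rewrite -[X in _ <= X]mulr1 ler_wpM2l.
  lra.
have hp := sext_pow k.+1 hkn.
have [p hp1] : exists p, (2 ^ k.+1)%N = p.+1.
  by exists (2 ^ k.+1).-1; rewrite prednK // expn_gt0.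
rewrite hp1 exprS in hp.
have h1 : 1/2 < l ^+ p.
  have : l * (1/2) < l * sext s k.+1 by rewrite ltr_pM2l //; lra.
  move=> h; have : l * (1/2) < l * l ^+ p by rewrite (mulrC l) in h; lra.
  by rewrite ltr_pM2l //; lra.
have hb := bern t p; rewrite (ltW t0) t1 /= -hlt in hb; have := hb isT.
have hpt : 0 <= p%:R * t by rewrite mulr_ge0 // ltW.
move=> hb'.
have : (1 + p%:R * t) / 2 < 1.
  have : (1/2) * (1 + p%:R * t) < l ^+ p * (1 + p%:R * t).
    by rewrite ltr_pM2r //; lra.
  lra.
move=> h2.
rewrite hp1 -natr1 ler_pdivlMr //.
have : p%:R * t < 1 by lra.
nra.
Qed.

End Eq.


Lemma main_bound (l : R) n (s : 'I_n -> R) (t : R) :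
  0 < t <= 1 -> l = 1 - t -> is_equilibrium l s ->
  Jmat l s \in unitmx /\
  forall i j, `|invmx (Jmat l s) i j| <= 8 * n%:R / t.
Proof.
move=> ht hlt heq.
have /andP[t0 t1] := ht.
have hl0 : 0 <= l by lra.
have hl1 : l <= 1 by lra.
have ha := @aa_ge0 l n s hl0 heq.
have [hu _] := mulmx1_unit (@JB l n s ha).
split => // i j.
have -> : invmx (Jmat l s) = Bmx l n s.
  by rewrite -[LHS]mulmx1 -(@JB l n s ha) mulmxA mulVmx // mul1mx.
rewrite /Bmx mxE.
apply: le_trans (@xs_bound l n s ha _ _) _.
pose K := (\max_(k < n.+1 | (1/2 < sext s k)%R) (k : nat))%N.
have hK1 : forall k, (K < k)%N -> aa l s k <= 1.
  move=> k hk; rewrite /aa.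
  case: (leqP k n) => hkn; last by rewrite sext_big // mulr0; lra.
  have hs : sext s k <= 1/2.
    rewrite leNgt; apply/negP => hlt2.
    have := @leq_bigmax_cond _ (fun k : 'I_n.+1 => 1/2 < sext s k) (fun k : 'I_n.+1 => nat_of_ord k) (Ordinal (hkn : (k < n.+1)%N)) hlt2.
    by rewrite -/K /= leqNgt hk.
  have := ler_pM hl0 (@sext_ge0 l n s heq k) hl1 hs; lra.
have hK2 : (2 ^ K)%:R <= 2 / t :> R.
  rewrite /K; apply: (big_ind (fun x => (2 ^ x)%:R <= 2 / t :> R)).
  - by rewrite expn0 ler_pdivlMr //; lra.
  - move=> x y hx hy; case: (leqP x y) => hxy.
      by [].
    by [].
  - by move=> k hk; apply: (@half_bound l n s hl0 heq t k hlt ht).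
have hz := @zs_bound l n s ha K (@aa_le2 l n s hl0 hl1 heq) hK1 i.+1.
have hi : (i.+1)%:R <= n%:R :> R by rewrite ler_nat ltn_ord.
have hm : 2 ^+ minn i.+1 K.+1 <= 2 ^+ K.+1 :> R.
  by rewrite ler_eXn2l ?geq_minr //; lra.
have hK3 : 2 ^+ K.+1 <= 4 / t :> R.
  rewrite exprS -natrX; move: hK2; rewrite !ler_pdivlMr //; lra.
have h0 : 0 <= 2 ^+ minn i.+1 K.+1 :> R by rewrite exprn_ge0.
have : (i.+1)%:R * 2 ^+ minn i.+1 K.+1 <= n%:R * (4 / t) :> R.
  apply: ler_pM => //; first exact: le_trans hm hK3.
have -> : 8 * n%:R / t = 2 * (n%:R * (4 / t)) :> R by rewrite /=; field; rewrite gt_eqF.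
lra.
Qed.

End Alg.
Theorem lemma7 (R : realType) (gamma alpha xi : R) (b : nat -> nat)
    (sstar : forall N : nat, 'I_(b N) -> R) :
  0 < gamma <= 1 ->
  0 < alpha < 1 / 4 ->
  0 < xi ->
  (forall N, (1 <= b N)%N) ->
  (exists (C : R) (N0 : nat), forall N, (N0 <= N)%N -> (b N)%:R <= C * ln N%:R) ->
  (exists N1 : nat, forall N, (N1 <= N)%N -> is_equilibrium (lam gamma alpha N) (sstar N)) ->
  exists N0 : nat, forall N : nat, (N0 <= N)%N ->
    Jmat (lam gamma alpha N) (sstar N) \in unitmx /\
    forall i j : 'I_(b N),
      `| invmx (Jmat (lam gamma alpha N) (sstar N)) i j |
        <= 12 / gamma * N%:R `^ (2 * alpha + 2 * xi).
Proof.
move=> /andP[g0 g1] /andP[a0 a1] x0 _ [C [N2 hC]] [N1 hE].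
pose Z := (`|C| / xi + 1) `^ (1 / xi).
pose M := (Num.truncn Z).+1.
exists (maxn (maxn N1 N2) (maxn 1 M)) => N hN.
have hN1 : (N1 <= N)%N by move: hN; rewrite !geq_max => /andP[/andP[]]. 
have hN2 : (N2 <= N)%N by move: hN; rewrite !geq_max => /andP[/andP[]]. 
have hN3 : (1 <= N)%N by move: hN; rewrite !geq_max => /andP[_ /andP[]]. 
have hN4 : (M <= N)%N by move: hN; rewrite !geq_max => /andP[_ /andP[]]. 
set NR := N%:R : R.
have hNR1 : 1 <= NR by rewrite /NR ler1n.
have hNR0 : 0 < NR by lra.
set P := NR `^ alpha.
have hP1 : 1 <= P by rewrite /P -(powRr0 NR) ler_powR // ltW.
set t := gamma / P.
have ht0 : 0 < t by rewrite /t divr_gt0 //; lra.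
have ht1 : t <= 1 by rewrite /t ler_pdivrMr ?mul1r; lra.
have hl : lam gamma alpha N = 1 - t by [].
have [hu hb] := @main_bound R (lam gamma alpha N) (b N) (sstar N) t
   (introT andP (conj ht0 ht1)) hl (hE N hN1).
split => // i j.
apply: le_trans (hb i j) _.
set n := b N.
set Q := NR `^ xi.
have hQ0 : 0 < Q by rewrite /Q powR_gt0.
have hlnQ : ln NR <= Q / xi.
  have := ln_sublinear hQ0; rewrite /Q ln_powR => h.
  by rewrite ler_pdivlMr // mulrC; apply: ltW.
have hZ : `|C| / xi + 1 <= Q.
  have hZ0 : 0 <= `|C| / xi + 1 by rewrite addr_ge0 // divr_ge0 // ltW.
  have hZN : Z <= NR.
    apply: le_trans (ltW (truncnS_gt Z)) _.
    by rewrite /NR ler_nat.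
  have := @ge0_ler_powR _ xi (ltW x0) Z NR (powR_ge0 _ _) (ltW hNR0) hZN.
  rewrite /Z -powRrM mul1r mulVf ?gt_eqF // powRr1 //.
have hn : n%:R <= Q * Q.
  apply: le_trans (hC N hN2) _.
  have h1 : C * ln NR <= `|C| * ln NR by apply: ler_wpM2r; [exact: ln_ge0 | exact: ler_norm].
  apply: le_trans h1 _.
  have h2 : `|C| * ln NR <= `|C| * (Q / xi) by apply: ler_wpM2l.
  apply: le_trans h2 _.
  have -> : `|C| * (Q / xi) = (`|C| / xi) * Q by rewrite mulrA mulrAC.
  apply: ler_wpM2r; first exact: ltW.
  lra.
have hQQ : NR `^ (2 * xi) = Q * Q.
  have -> : 2 * xi = xi + xi by ring.
  by rewrite powRD // (gt_eqF hNR0) implybT.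
have hD : NR `^ (2 * alpha + 2 * xi) = NR `^ (2 * alpha) * NR `^ (2 * xi).
  by rewrite powRD // (gt_eqF hNR0) implybT.
have hA : P <= NR `^ (2 * alpha) by rewrite /P ler_powR //; lra.
rewrite hD hQQ.
have -> : 8 * n%:R / t = 8 * n%:R * P / gamma.
  by rewrite /t; field; rewrite (gt_eqF g0) (gt_eqF (lt_le_trans ltr01 hP1)).
rewrite [12 / gamma * _]mulrAC ler_pM2r ?invr_gt0 //.
have hP0 : 0 <= P by lra.
have hQ2 : 0 <= Q * Q by rewrite mulr_ge0 // ltW.
have : n%:R * P <= (Q * Q) * NR `^ (2 * alpha) by apply: ler_pM => //.
nra.
Qed.
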